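(* In the binary model, if $\lambda\le\frac12$, then the Lebesgue measure of $S$ is $0$ almost surely.
   Context: Binary model. Let $T=\{1,2\}^*$ be the set of finite words over $\{1,2\}$ (the rooted binary tree; $v|j$ is the prefix of $v$ of length $j$). Let $\{a_v\}_{v\in T,\,|v|\ge1}$ be i.i.d. random variables with $\mathbb{P}(a_v=0)=\mathbb{P}(a_v=1)=\frac12$. Fix $\lambda\in(0,1)$. For $\omega\in\{1,2\}^{\mathbb{N}}$ put $f(\omega)=\sum_{j\ge1}a_{\omega|j}\lambda^j$. Let $\mu$ be the image under $f$ of the uniform product measure on $\{1,2\}^{\mathbb{N}}$, and $S=f(\{1,2\}^{\mathbb{N}})$ its (random, compact) support. *)

(* Defs.v *)
From HB Require Import structures.
From mathcomp Require Import all_boot all_order all_algebra.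
From mathcomp Require Import all_classical all_reals all_analysis.
Set Implicit Arguments. Unset Strict Implicit. Unset Printing Implicit Defensive.
Import Order.TTheory GRing.Theory Num.Theory.
Import numFieldNormedType.Exports.
Local Open Scope classical_set_scope.
Local Open Scope ring_scope.

(* Vertices of the rooted binary tree T = {1,2}^* are encoded as finite
   words over bool (false <-> 1, true <-> 2); infinite words
   omega in {1,2}^N are encoded as functions nat -> bool. *)
Definition word := seq bool.

Definition prefix (omega : nat -> bool) (j : nat) : word :=
  [seq omega i | i <- iota 0 j].

Definition mutually_independent_rv {d} {T : measurableType d} {R : realType}
  (P : probability T R) (I : eqType) (X : I -> {RV P >-> R}) : Prop :=
  forall (s : seq I) (B : I -> set R),
    uniq s -> (forall i, measurable (B i)) ->
    P (\bigcap_(i in [set` s]) (X i @^-1` B i)) =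
    (\prod_(i <- s) P (X i @^-1` B i))%E.

Arguments mutually_independent_rv {d T R} P {I} X.

Definition binary_f {T : Type} {R : realType} (a : word -> T -> R)
  (lambda : R) (x : T) (omega : nat -> bool) : R :=
  limn (fun n => \sum_(0 <= j < n) (a (prefix omega j.+1) x * lambda ^+ j.+1)).

(* S = f({1,2}^N), the (random) support of mu *)
Definition binary_S {T : Type} {R : realType} (a : word -> T -> R)
  (lambda : R) (x : T) : set R :=
  range (binary_f a lambda x).

(* Main.v *)
Require Import Defs.
From HB Require Import structures.
From mathcomp Require Import all_boot all_order all_algebra.
From mathcomp Require Import all_classical all_reals all_analysis.
From mathcomp Require Import zify ring lra.
Import Order.TTheory GRing.Theory Num.Theory.
Import numFieldNormedType.Exports.
Local Open Scope classical_set_scope.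
Local Open Scope ring_scope.

Fixpoint cfg (n : nat) : finType :=
  match n with 0 => unit | n.+1 => ((bool * cfg n) * (bool * cfg n))%type end.

Fixpoint occ (n : nat) : cfg n -> seq bool -> bool :=
  match n return cfg n -> seq bool -> bool with
  | 0 => fun _ s => nilp s
  | n'.+1 => fun c s =>
      match s with
      | [::] => false
      | b :: s' => ((b == c.1.1) && occ n' c.1.2 s') || ((b == c.2.1) && occ n' c.2.2 s')
      end
  end.

Arguments occ {n}.
Fixpoint allseq (n : nat) : seq (seq bool) :=
  if n is n'.+1 then [seq false :: s | s <- allseq n'] ++ [seq true :: s | s <- allseq n']
  else [:: [::]].

Lemma size_allseq n : size (allseq n) = (2 ^ n)%N.
Proof. elim: n => [|n IH] //=; rewrite size_cat !size_map IH expnS; lia. Qed.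

Lemma mem_allseq n s : (s \in allseq n) = (size s == n).
Proof.
elim: n s => [|n IH] [|b s] //=; rewrite mem_cat.
- by apply/orP; case=> /mapP[].
- rewrite eqSS -IH; case: b.
  + rewrite orbC; apply/orP/idP => [[/mapP[t Ht [->]]|/mapP[t Ht []]]|H] //.
    by left; apply/mapP; exists s.
  + apply/orP/idP => [[/mapP[t Ht [->]]|/mapP[t Ht []]]|H] //.
    by left; apply/mapP; exists s.
Qed.

Fixpoint ext (n : nat) (l : word -> bool) : cfg n :=
  match n return cfg n with
  | 0 => tt
  | n'.+1 => ((l [:: false], ext n' (fun w => l (false :: w))),
              (l [:: true], ext n' (fun w => l (true :: w))))
  end.

Fixpoint look (n : nat) : cfg n -> word -> bool :=
  match n return cfg n -> word -> bool with
  | 0 => fun _ _ => false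
  | n'.+1 => fun c v =>
      match v with
      | [::] => false
      | b :: w => if w is [::] then (if b then c.2.1 else c.1.1)
                  else (if b then look n' c.2.2 w else look n' c.1.2 w)
      end
  end.
Arguments look {n}.

Fixpoint Ws (n : nat) : seq word :=
  if n is n'.+1 then [:: [:: false]; [:: true]] ++ [seq false :: w | w <- Ws n']
     ++ [seq true :: w | w <- Ws n'] else [::].

Lemma mem_cons_map (b b' : bool) (w : word) (s : seq word) :
  (b :: w \in [seq b' :: x | x <- s]) = (b == b') && (w \in s).
Proof.
by apply/mapP/andP => [[x Hx [-> ->]]|[/eqP-> Hw]]; [split|exists w].
Qed.

Lemma nil_notin_map (b' : bool) (s : seq word) : ([::] \in [seq b' :: x | x <- s]) = false.
Proof. by apply/negbTE/mapP => -[]. Qed.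

Lemma mem_Ws n v : (v \in Ws n) = (0 < size v <= n)%N.
Proof.
elim: n v => [|n IH] v; first by rewrite in_nil; case: (size v).
rewrite /= !inE !mem_cat.
case: v => [|b w] /=; first by rewrite !nil_notin_map.
rewrite !mem_cons_map !IH.
by case: b; case: w => [|x w] /=; rewrite ?orbF ?ltnS.
Qed.

Lemma uniq_Ws n : uniq (Ws n).
Proof.
elim: n => [|n IH] //=.
rewrite !inE !mem_cat !mem_cons_map !mem_Ws /=.
rewrite cat_uniq !map_inj_uniq ?IH; try by move=> x y [].
rewrite andbT /=; apply/hasPn => x /mapP [w _ ->].
by rewrite mem_cons_map.
Qed.

Lemma look_ext n l v : v \in Ws n -> look (ext n l) v = l v.
Proof.
elim: n l v => [|n IH] l v; first by rewrite in_nil.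
rewrite mem_Ws; case: v => [|b w] //= Hs.
case: w Hs => [|b' w] Hs; first by case: b.
case: b; rewrite IH // mem_Ws //.
Qed.

Lemma card_cfg n : #|cfg n| = (2 ^ size (Ws n))%N.
Proof.
elim: n => [|n IH]; first by rewrite /= card_unit.
rewrite /= !card_prod card_bool IH /= !size_cat !size_map.
by rewrite -!expnS -expnD addSn addnS.
Qed.

Definition labseq n (l : word -> bool) (om : nat -> bool) : seq bool :=
  [seq l (Defs.prefix om j.+1) | j <- iota 0 n].

Lemma prefixS om j : Defs.prefix om j.+1 = om 0%N :: Defs.prefix (fun i => om i.+1) j.
Proof. by rewrite /Defs.prefix /= -(addn0 1%N) iotaDl -map_comp. Qed.

Lemma labseqS n l om : labseq n.+1 l om =
  l [:: om 0%N] :: labseq n (fun w => l (om 0%N :: w)) (fun i => om i.+1).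
Proof.
rewrite /labseq /= -(addn0 1%N) iotaDl -map_comp; congr (_ :: _).
by apply: eq_map => j /=; rewrite add1n prefixS.
Qed.

Lemma size_labseq n l om : size (labseq n l om) = n.
Proof. by rewrite size_map size_iota. Qed.

Lemma occ_ext n l om : occ (ext n l) (labseq n l om).
Proof.
elim: n l om => [|n IH] l om //.
rewrite labseqS /=.
by case: (om 0%N); rewrite eqxx IH ?orbT.
Qed.

Section comb.
Variable R : realType.

Definition Qv n s : R := (\sum_(c : cfg n) (occ c s)%:R) / #|cfg n|%:R.

Lemma card_cfg_gt0 n : (0 < #|cfg n|)%N.
Proof. by apply/card_gt0P; elim: n => [|n [c _]]; [exists tt|exists ((true,c),(true,c))]. Qed.

Lemma sum_pair (F : bool * cfg 0 -> R) : True. Proof. by []. Qed.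

Lemma QvS n b s : Qv n.+1 (b :: s) = Qv n s - (Qv n s)^+2 / 4.
Proof.
rewrite /Qv.
set N := #|cfg n|%:R. set C := \sum_(c : cfg n) (occ c s)%:R.
have N0 : N != 0 by rewrite pnatr_eq0 -lt0n card_cfg_gt0.
have cardS : #|cfg n.+1|%:R = (2 * N)^+2 :> R.
  by rewrite /= !card_prod card_bool natrM -/N expr2 natrM.
have key : \sum_(c : cfg n.+1) (occ c (b :: s))%:R =
   (2 * N)^+2 - (2 * N - C)^+2 :> R.
  have E : forall c : cfg n.+1, (occ c (b :: s))%:R =
     1 - (1 - ((b == c.1.1) && occ c.1.2 s)%:R) * (1 - ((b == c.2.1) && occ c.2.2 s)%:R) :> R.
    move=> [[b1 c1] [b2 c2]] /=.
    case: ((b == b1) && occ c1 s); case: ((b == b2) && occ c2 s) => /=; ring.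
  rewrite (eq_bigr _ (fun c _ => E c)) sumrB.
  have -> : \sum_(c : cfg n.+1) (1 : R) = (2 * N)^+2.
    by rewrite sumr_const -cardS.
  congr (_ - _).
  rewrite -(pair_big xpredT xpredT (fun p1 p2 => (1 - ((b == p1.1) && occ p1.2 s)%:R) *
      (1 - ((b == p2.1) && occ p2.2 s)%:R) : R)) /=.
  have Hs : \sum_(p : bool * cfg n) (1 - ((b == p.1) && occ p.2 s)%:R : R) = 2 * N - C.
    rewrite sumrB sumr_const card_prod card_bool natrM -/N mulr_natl; congr (_ - _).
    rewrite -(pair_big xpredT xpredT (fun (b' : bool) (c : cfg n) => ((b == b') && occ c s)%:R : R)) /=.
    rewrite big_bool /=.
    clear E; case: b => /=; [rewrite [X in _ + X]big1 ?addr0 | rewrite [X in X + _]big1 ?add0r] => //.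
  under eq_bigr => i _ do rewrite -big_distrr.
  by rewrite -big_distrl /= Hs expr2.
by rewrite key cardS; field.
Qed.

Definition Avg n : R := (\sum_(s <- allseq n) Qv n s) / (2 ^ n)%:R.
Definition Kc n (c : cfg n) : R := \sum_(s <- allseq n) (occ c s)%:R.

Arguments Kc {n}.
Lemma Qv_ge0 n s : 0 <= Qv n s.
Proof. by rewrite /Qv divr_ge0 // sumr_ge0. Qed.

Lemma Avg_ge0 n : 0 <= Avg n.
Proof. by rewrite /Avg divr_ge0 // sumr_ge0 // => i _; exact: Qv_ge0. Qed.

Lemma AvgS n : Avg n.+1 =
  Avg n - (\sum_(s <- allseq n) (Qv n s)^+2) / (4 * (2 ^ n)%:R).
Proof.
rewrite /Avg /= big_cat !big_map /=.
rewrite (eq_bigr (fun s => Qv n s - Qv n s ^+ 2 / 4)); last by move=> i _; rewrite QvS.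
rewrite [X in _ + X](eq_bigr (fun s => Qv n s - Qv n s ^+ 2 / 4)); last by move=> i _; rewrite QvS.
rewrite sumrB.
have -> : \sum_(s <- allseq n) Qv n s ^+ 2 / 4 = (\sum_(s <- allseq n) Qv n s ^+ 2) / 4.
  by rewrite mulr_suml.
rewrite expnS natrM.
set A := \sum_(s <- allseq n) Qv n s. set B := \sum_(s <- allseq n) Qv n s ^+ 2.
field.
by rewrite pnatr_eq0 expn_eq0.
Qed.

Lemma CS (r : seq R) : (\sum_(x <- r) x)^+2 <= (size r)%:R * \sum_(x <- r) x^+2.
Proof.
elim: r => [|x r IH]; first by rewrite !big_nil expr2 mulr0.
rewrite !big_cons.
have -> : (size (x :: r))%:R = (size r)%:R + 1 :> R by rewrite /= -addn1 natrD.
set S := \sum_(x <- r) x in IH *. set T := \sum_(x <- r) x ^+ 2 in IH *.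
set m := (size r)%:R in IH *.
have m0 : 0 <= m by [].
have T0 : 0 <= T by rewrite sumr_ge0 // => i _; exact: sqr_ge0.
have : 0 <= (S - m * x)^+2 by exact: sqr_ge0.
move=> Hsq.
suff H : 0 <= T + m * x^+2 - 2 * S * x by nra.
have [m00|mpos] := eqVneq m 0.
  have S0 : S = 0 by move: IH; rewrite m00 mul0r => H; apply/eqP; rewrite -sqrf_eq0 eq_le H sqr_ge0.
  by rewrite m00 S0; nra.
have mp : 0 < m by rewrite lt_def mpos.
have H2 : 0 <= m * (T + m * x^+2 - 2 * S * x) by nra.
by rewrite pmulr_rge0 in H2.
Qed.

Lemma Avg_dec n : Avg n.+1 <= Avg n - (Avg n)^+2 / 4.
Proof.
rewrite AvgS lerD2l lerN2 /Avg.
have := CS [seq Qv n s | s <- allseq n].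
rewrite size_map size_allseq !big_map.
set A := \sum_(s <- allseq n) Qv n s. set B := \sum_(s <- allseq n) Qv n s ^+ 2.
set N := (2 ^ n)%:R.
have N0 : 0 < N by rewrite ltr0n expn_gt0.
move=> H.
rewrite -subr_ge0.
have -> : B / (4 * N) - (A / N) ^+ 2 / 4 = (N * B - A ^+ 2) / (4 * N ^+ 2).
  by field; rewrite gt_eqF.
by rewrite divr_ge0 ?subr_ge0 // mulr_ge0 // exprn_ge0 // ltW.
Qed.

Lemma Avg0 : Avg 0 = 1.
Proof. by rewrite /Avg /= big_seq1 /Qv (eq_bigr (fun _ => 1)) // sumr_const card_unit expn0 !divr1. Qed.

Lemma Avg_le n : Avg n <= 4 / (n%:R + 4).
Proof.
elim: n => [|n IH]; first by rewrite Avg0 add0r divff.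
apply: (le_trans (Avg_dec n)).
have A0 := Avg_ge0 n.
set u := 4 / (n%:R + 4) in IH.
have k0 : 0 < n%:R + 4 :> R by rewrite ltr_wpDl.
have u1 : u <= 1 by rewrite /u ler_pdivrMr // mul1r lerDr.
have H1 : Avg n - Avg n ^+ 2 / 4 <= u - u ^+ 2 / 4 by nra.
apply: (le_trans H1).
rewrite /u.
have -> : (n.+1)%:R + 4 = (n%:R + 4) + 1 :> R by rewrite -natr1; ring.
set k := n%:R + 4 in k0 *.
rewrite -subr_ge0.
have -> : 4 / (k + 1) - (4 / k - (4 / k) ^+ 2 / 4) = 4 / (k ^+ 2 * (k + 1)).
  have k1 : 0 < k + 1 by rewrite addr_gt0.
  by field; rewrite (gt_eqF k1) (gt_eqF k0).
by rewrite divr_ge0 // mulr_ge0 // ?exprn_ge0 ?ltW // addr_gt0.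
Qed.

Lemma Avg_Kc n : Avg n = \sum_(c : cfg n) Kc c / ((2 ^ n)%:R * #|cfg n|%:R).
Proof.
rewrite /Avg /Kc /Qv -!mulr_suml exchange_big /= -mulrA -invfM.
by rewrite [X in _ * X^-1]mulrC.
Qed.

Lemma my_markov n (e : R) : 0 < e ->
  \sum_(c : cfg n | e <= Kc c / (2 ^ n)%:R) (#|cfg n|%:R)^-1 <= Avg n / e.
Proof.
move=> e0.
rewrite Avg_Kc -mulr_suml.
apply: (le_trans (y := \sum_(c : cfg n) Kc c / ((2 ^ n)%:R * #|cfg n|%:R) / e)).
  rewrite [X in _ <= X](bigID (fun c => e <= Kc c / (2 ^ n)%:R)) /=.
  rewrite -[X in X <= _]addr0; apply: lerD.
    apply: ler_sum => c Hc.
    have -> : Kc c / ((2 ^ n)%:R * #|cfg n|%:R) / e = (Kc c / (2 ^ n)%:R / e) * #|cfg n|%:R^-1.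
      by rewrite invfM; ring.
    rewrite -[X in X <= _]mul1r; apply: ler_wpM2r; first by rewrite invr_ge0.
    by rewrite ler_pdivlMr // mul1r.
  apply: sumr_ge0 => c _; apply: divr_ge0; last exact: ltW.
  by apply: divr_ge0; [rewrite /Kc sumr_ge0|].
by rewrite !mulr_suml.
Qed.
End comb.

Lemma my_le_mu_bigsetU d (T : ringOfSetsType d) (R : realType) (mu : {measure set T -> \bar R})
  (I : Type) (r : seq I) (Pr : pred I) (F : I -> set T) :
  (forall i, Pr i -> measurable (F i)) ->
  (mu (\big[setU/set0]_(i <- r | Pr i) F i) <= \sum_(i <- r | Pr i) mu (F i))%E.
Proof.
move=> mF; elim: r => [|i r IH]; first by rewrite !big_nil measure0.
rewrite !big_cons; case: ifP => Pi //.
apply: le_trans (measureU2 _ _ _) _; [exact: mF|exact: bigsetU_measurable|].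
exact: leeD.
Qed.

Lemma in_bigsetU (T : Type) (I : eqType) (r : seq I) (Pr : pred I) (F : I -> set T) (i : I) (x : T) :
  i \in r -> Pr i -> F i x -> (\big[setU/set0]_(j <- r | Pr j) F j) x.
Proof.
elim: r => [//|j r IH]; rewrite inE => /orP[/eqP <-|Hi] Pi Fx; rewrite big_cons.
  by rewrite Pi; left.
by case: ifP => _; [right|]; apply: IH.
Qed.

Lemma lebS (R : realType) (A B : set R) : A `<=` B -> ((@lebesgue_measure R) A <= lebesgue_measure B)%E.
Proof.
move=> AB; rewrite /lebesgue_measure /lebesgue_stieltjes_measure /measure_extension.
exact: le_outer_measure.
Qed.

Section geom.
Variable R : realType.
Variable lam : R.
Hypothesis lam0 : 0 < lam.
Hypothesis lam2 : lam <= 1/2.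
Variable f : word -> R.
Hypothesis f01 : forall v, (0 < size v)%N -> f v = 0 \/ f v = 1.

Definition psum (om : nat -> bool) (k : nat) : R :=
  \sum_(0 <= j < k) f (Defs.prefix om j.+1) * lam ^+ j.+1.

Definition pos n (s : seq bool) : R := \sum_(0 <= j < n) (nth false s j)%:R * lam ^+ j.+1.

Definition lf v := f v == 1.

Lemma fl v : (0 < size v)%N -> f v = (lf v)%:R.
Proof. by rewrite /lf => /f01 [->|->]; rewrite ?eqxx // eq_sym oner_eq0. Qed.

Lemma size_prefix om j : size (Defs.prefix om j) = j.
Proof. by rewrite size_map size_iota. Qed.

Lemma f_ge0 om j : 0 <= f (Defs.prefix om j.+1).
Proof. by rewrite fl ?size_prefix. Qed.

Lemma f_le1 om j : f (Defs.prefix om j.+1) <= 1.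
Proof. by rewrite fl ?size_prefix //; case: lf. Qed.

Lemma lam1 : lam < 1.
Proof. by apply: (le_lt_trans lam2); rewrite ltr_pdivrMr // mul1r ltr1n. Qed.

Lemma psumS om k : psum om k.+1 = psum om k + f (Defs.prefix om k.+1) * lam ^+ k.+1.
Proof. by rewrite /psum big_nat_recr. Qed.

Lemma psum_tail om n k : (n <= k)%N ->
  psum om k <= psum om n + (lam ^+ n.+1 - lam ^+ k.+1) / (1 - lam).
Proof.
have l1 : 0 < 1 - lam by rewrite subr_gt0 lam1.
elim: k => [|k IH].
  by rewrite leqn0 => /eqP ->; rewrite subrr mul0r addr0.
rewrite leq_eqVlt => /orP[/eqP ->|]; first by rewrite subrr mul0r addr0.
rewrite ltnS => /IH H.
rewrite psumS.
have Hf := f_le1 om k. have Hf0 := f_ge0 om k.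
have Hl : 0 <= lam ^+ k.+1 by rewrite exprn_ge0 // ltW.
apply: (le_trans (lerD H (ler_wpM2r Hl Hf))).
rewrite mul1r -addrA lerD2l.
rewrite le_eqVlt; apply/orP; left; apply/eqP.
rewrite [lam ^+ k.+2]exprS; field.
by rewrite gt_eqF.
Qed.

Lemma psum_nd om : {homo psum om : n m / (n <= m)%N >-> n <= m}.
Proof.
apply/nondecreasing_seqP => k; rewrite psumS lerDl.
by rewrite mulr_ge0 ?f_ge0 // exprn_ge0 // ltW.
Qed.

Lemma psum_cvg om : cvgn (psum om).
Proof.
apply: nondecreasing_is_cvgn; first exact: psum_nd.
exists (lam / (1 - lam)) => _ [k _ <-].
apply: le_trans; first exact: (psum_tail om 0 k (leq0n k)).
rewrite /psum big_geq // add0r expr1 ler_pM2r ?invr_gt0 ?subr_gt0 ?lam1 //.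
by rewrite gerDl oppr_le0 exprn_ge0 // ltW.
Qed.

Lemma lim_lb om n : psum om n <= limn (psum om).
Proof. exact: nondecreasing_cvgn_le (psum_nd om) (psum_cvg om) n. Qed.

Lemma lim_ub om n : limn (psum om) <= psum om n + lam ^+ n.+1 / (1 - lam).
Proof.
apply: limr_le; first exact: psum_cvg.
near=> k.
have nk : (n <= k)%N by near: k; exists n.
apply: (le_trans (psum_tail om n k nk)).
rewrite lerD2l ler_pM2r ?invr_gt0 ?subr_gt0 ?lam1 //.
by rewrite gerDl oppr_le0 exprn_ge0 // ltW.
Unshelve. all: by end_near.
Qed.

Lemma psum_pos om n : psum om n = pos n (labseq n lf om).
Proof.
apply: eq_big_nat => j /andP[_ jn].
rewrite /labseq (nth_map 0%N) ?size_iota // nth_iota // add0n.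
by rewrite fl // size_prefix.
Qed.


Lemma lamn n : lam ^+ n <= (2 ^ n)%:R^-1.
Proof.
elim: n => [|n IH]; first by rewrite expr0 expn0 invr1.
rewrite exprS expnS natrM invfM.
apply: ler_pM => //; [exact: ltW|by rewrite exprn_ge0 // ltW|].
by move: lam2; rewrite div1r.
Qed.

Lemma geom n : (lebesgue_measure (range (fun om => limn (psum om))) <=
   (@Kc R n (ext n lf) / (2 ^ n)%:R)%:E)%E.
Proof.
set d := lam ^+ n.+1 / (1 - lam).
set c := ext n lf.
have l1 : 0 < 1 - lam by rewrite subr_gt0 lam1.
have d0 : 0 <= d by rewrite divr_ge0 ?exprn_ge0 ?ltW.
have sub : range (fun om => limn (psum om)) `<=`
    \big[setU/set0]_(s <- allseq n | occ c s) `[pos n s, pos n s + d]%classic.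
  move=> _ [om _ <-].
  apply: (@in_bigsetU _ _ _ _ _ (labseq n lf om)).
  - by rewrite mem_allseq size_labseq.
  - exact: occ_ext.
  - by rewrite /= in_itv /= -psum_pos lim_lb lim_ub.
apply: (le_trans (@lebS R _ _ sub)).
apply: (le_trans (@my_le_mu_bigsetU _ _ _ lebesgue_measure _ (allseq n) (occ c) _ _)); first by move=> s _; exact: measurable_itv.
apply: (le_trans (y := \sum_(s <- allseq n | occ c s) d%:E)).
  apply: lee_sum => s _; have := lebesgue_measure_itv `[pos n s, pos n s + d]; rewrite /= => ->.
  case: ifP => _; last by rewrite lee_fin.
  by rewrite -EFinD lee_fin addrAC subrr add0r.
rewrite sumEFin lee_fin big_mkcond /Kc mulr_suml /=.
apply: ler_sum => s _; case: (occ c s); last by rewrite mul0r.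
rewrite mul1r /d (_ : lam ^+ n.+1 / (1 - lam) = lam ^+ n * (lam / (1 - lam))); last by rewrite exprS; ring.
apply: (le_trans (y := lam ^+ n * 1)).
  apply: ler_wpM2l; first by rewrite exprn_ge0 // ltW.
  rewrite ler_pdivrMr // mul1r; move: lam2; rewrite div1r => H.
  have : lam <= 1 - lam.
    have h2 : (2 : R)^-1 + 2^-1 = 1 by field.
    lra.
  by [].
by rewrite mulr1 lamn.
Qed.
End geom.

Lemma prod_const_seq (R : realType) (I : Type) (s : seq I) (x : R) :
  \prod_(i <- s) x = x ^+ size s.
Proof. by elim: s => [|i s IH]; rewrite ?big_nil ?big_cons ?IH ?exprS. Qed.

Section prob.
Variables (d : measure_display) (T : measurableType d) (R : realType)
  (P : probability T R) (a : word -> {RV P >-> R}).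
Hypothesis Hind : mutually_independent_rv P a.
Hypothesis Hhalf : forall v : word, (0 < size v)%N ->
     P (a v @^-1` [set 0]) = (1 / 2)%:E /\ P (a v @^-1` [set 1]) = (1 / 2)%:E.

Definition atom n (c : cfg n) : set T :=
  \bigcap_(v in [set` Ws n]) (a v @^-1` [set (look c v)%:R]).

Lemma atom_meas n c : measurable (atom n c).
Proof.
apply: fin_bigcap_measurable; first exact: finite_seq.
by move=> v _; apply: measurable_funPTI.
Qed.

Lemma P_atom n c : P (atom n c) = ((#|cfg n|)%:R^-1)%:E.
Proof.
rewrite /atom (Hind _ (fun v => [set (look c v)%:R])) ?uniq_Ws //.
rewrite (eq_big_seq (fun _ => (1 / 2)%:E)); last first.
  move=> v; rewrite mem_Ws => /andP[Hv _].
  have [H0 H1] := Hhalf v Hv.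
  by case: (look c v); rewrite /= ?mulr1n ?mulr0n.
rewrite prodEFin prod_const_seq card_cfg natrX div1r exprVn.
by [].
Qed.

Definition Zs (m n : nat) : set T :=
  \big[setU/set0]_(c : cfg n | (m.+1%:R)^-1 <= Kc R n c / (2 ^ n)%:R) atom n c.

Lemma Zs_meas m n : measurable (Zs m n).
Proof. by apply: bigsetU_measurable => c _; exact: atom_meas. Qed.

Lemma P_Zs m n : (P (Zs m n) <= (m.+1%:R * Avg R n)%:E)%E.
Proof.
apply: (le_trans (@my_le_mu_bigsetU _ _ _ P _ _ _ _ _)); first by move=> c _; exact: atom_meas.
rewrite (eq_bigr (fun c => ((#|cfg n|)%:R^-1)%:E)); last by move=> c _; exact: P_atom.
rewrite sumEFin lee_fin.
apply: (le_trans (@my_markov R n (m.+1%:R^-1) _)); first by rewrite invr_gt0.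
by rewrite invrK mulrC.
Qed.


Lemma ae_good1 v : \forall x \ae P, (0 < size v)%N -> a v x = 0 \/ a v x = 1.
Proof.
have [Hv|Hv] := boolP (0 < size v)%N; last first.
  by apply: aeW => x H.
have [H0 H1] := Hhalf v Hv.
exists (a v @^-1` (~` ([set 0] `|` [set 1]))); split.
- by apply: measurable_funPTI; apply: measurableC; apply: measurableU.
- rewrite -preimage_setC probability_setC; last first.
    by apply: measurable_funPTI; apply: measurableU.
  rewrite preimage_setU measureU //; last first.
    apply/seteqP; split => x // [] /= -> E.
    by move: (@oner_neq0 R); rewrite E eqxx.
  have -> : (P (a v @^-1` [set 0%R]) + P (a v @^-1` [set 1%R]))%E = ((1/2)%R%:E + (1/2)%R%:E)%E.
    by congr (_ + _)%E; [exact: H0|exact: H1].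
  have h : (1/2 + 1/2 : R) = 1 by field.
  rewrite -EFinD h; change (((1:R)%:E - (1:R)%:E)%E = 0%E); by rewrite subee.
- by move=> x /= H E; apply: H.
Qed.

Definition goodn (n : nat) (x : T) : Prop :=
  if unpickle n is Some v then (0 < size v)%N -> a v x = 0 \/ a v x = 1 else True.

Lemma ae_good : \forall x \ae P, forall v, (0 < size v)%N -> a v x = 0 \/ a v x = 1.
Proof.
have : \forall x \ae P, forall n : nat, goodn n x.
  apply: (@ae_foralln _ _ _ P goodn) => n.
  rewrite /goodn; case: (unpickle n) => [v|]; first exact: ae_good1.
  exact: aeW.
apply: filterS => x H v.
by have := H (pickle v); rewrite /goodn pickleK.
Qed.


Lemma Avg_small (m : nat) (e : R) : 0 < e -> exists n, m.+1%:R * Avg R n <= e.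
Proof.
move=> e0.
set y := 4 * m.+1%:R / e.
have y0 : 0 <= y by rewrite /y divr_ge0 // ltW.
have Hy := archi_boundP y0.
set k := Num.Def.archi_bound y in Hy.
exists k.
have k0 : 0 < k%:R :> R by apply: le_lt_trans Hy.
have k4 : 0 < k%:R + 4 :> R by rewrite addr_gt0.
apply: (le_trans (y := m.+1%:R * (4 / (k%:R + 4)))).
  by apply: ler_wpM2l => //; exact: Avg_le.
rewrite mulrA ler_pdivrMr //.
move: Hy; rewrite /y ltr_pdivrMr // => Hy.
have : 0 <= e * 4 by rewrite mulr_ge0 // ltW.
nra.
Qed.

Lemma ae_Z m : \forall x \ae P, ~ (forall n, Zs m n x).
Proof.
exists (\bigcap_n Zs m n); split.
- by apply: bigcap_measurable; [exists 0%N|move=> k _; exact: Zs_meas].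
- apply/eqP; rewrite eq_le measure_ge0 andbT.
  apply/lee_addgt0Pr => e e0; rewrite add0e.
  have [n Hn] := Avg_small m e e0.
  apply: (le_trans (y := P (Zs m n))).
    apply: le_measure; rewrite ?inE.
    + by apply: bigcap_measurable; [exists 0%N|move=> k _; exact: Zs_meas].
    + exact: Zs_meas.
    + exact: bigcap_inf.
  by apply: (le_trans (P_Zs m n)); rewrite lee_fin.
- by move=> x /= /contrapT H n _; exact: H n.
Qed.

Lemma main0 lam : 0 < lam -> lam <= 1/2 ->
  \forall x \ae P, (@lebesgue_measure R) (binary_S (fun v => a v) lam x) = 0%E.
Proof.
move=> l0 l2.
have HZ := @ae_foralln _ _ _ P (fun m x => ~ (forall n, Zs m n x)) ae_Z.
move: ae_good HZ; apply: filterS2 => x Hg HZ.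
pose f := fun v => a v x.
have f01 : forall v, (0 < size v)%N -> f v = 0 \/ f v = 1 := Hg.
apply/eqP; rewrite eq_le measure_ge0 andbT.
apply/lee_addgt0Pr => e e0; rewrite add0e.
have [m Hm] : exists m : nat, (m.+1%:R)^-1 <= e.
  have ei0 : 0 <= e^-1 by rewrite invr_ge0 ltW.
  have Hb := archi_boundP ei0.
  exists (Num.Def.archi_bound e^-1).
  rewrite -[leRHS]invrK lef_pV2 ?posrE ?invr_gt0 //.
  by apply: ltW; apply: (lt_le_trans Hb); rewrite ler_nat.
have /existsNP [n Hn] := HZ m.
have Hlt : Kc R n (ext n (lf R f)) / (2 ^ n)%:R < (m.+1%:R)^-1.
  rewrite ltNge; apply/negP => Hle; apply: Hn.
  apply: (@in_bigsetU _ _ _ _ _ (ext n (lf R f))) => //.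
  move=> v /= Hv; rewrite look_ext //.
  by apply: fl => //; move: Hv; rewrite mem_Ws => /andP[].
apply: (le_trans (geom R lam l0 l2 f f01 n)).
rewrite lee_fin; apply: le_trans (ltW Hlt) Hm.
Qed.

End prob.

Theorem proposition1p8 (d : measure_display) (T : measurableType d)
  (R : realType) (P : probability T R) (a : word -> {RV P >-> R})
  (lambda : R) :
  mutually_independent_rv P a ->
  (forall v : word, (0 < size v)%N ->
     P (a v @^-1` [set 0]) = (1 / 2)%:E /\
     P (a v @^-1` [set 1]) = (1 / 2)%:E) ->
  0 < lambda -> lambda <= 1 / 2 ->
  {ae P, forall x, (@lebesgue_measure R) (binary_S (fun v => a v) lambda x) = 0%E}.
Proof.
move=> Hind Hhalf l0 l2.
exact: (@main0 d T R P a Hind Hhalf lambda l0 l2).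
Qed.
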